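(* Let $(\Omega,\mathcal F,\mathbb P)$ be a probability space and $u:\Omega\times\mathbb R\to\mathbb R$ satisfy: (i) for every $\omega$, $u(\omega,\cdot)$ is right continuous with left limits, nondecreasing, and $u(\omega,0)=0$; (ii) $u(\cdot,x)\in\mathcal L^1(\Omega,\mathcal F,\mathbb P)$ for every $x\in\mathbb R$; (iii) the functional $T_u(f):=\int_\Omega u(\omega,f(\omega))\,\mathbb P(d\omega)$ on $\mathcal L^\infty(\Omega,\mathcal F)$ is continuous from below, i.e. $T_u(f_n)\to T_u(f)$ whenever $f_n\in\mathcal L^\infty(\Omega,\mathcal F)$ and $f_n(\omega)\uparrow f(\omega)$ for every $\omega$, with $f\in\mathcal L^\infty(\Omega,\mathcal F)$. Then $A_{\mathrm{cont}}:=\{\omega\in\Omega: x\mapsto u(\omega,x)\text{ is continuous on }\mathbb R\}\in\mathcal F$ and $\mathbb P(A_{\mathrm{cont}})=1$.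
   Context: $\mathcal L^\infty(\Omega,\mathcal F)$: bounded $\mathcal F$-measurable real functions. *)

(* Defs.v *)
From HB Require Import structures.
From mathcomp Require Import all_boot all_order all_algebra.
From mathcomp Require Import all_classical all_reals all_analysis.
Set Implicit Arguments. Unset Strict Implicit. Unset Printing Implicit Defensive.
Import Order.TTheory GRing.Theory Num.Theory.
Import numFieldNormedType.Exports.
Local Open Scope classical_set_scope.
Local Open Scope ring_scope.

Definition Linfty d (T : measurableType d) (R : realType) (f : T -> R) : Prop :=
  measurable_fun setT f /\ exists M : R, forall w, `|f w| <= M.

Definition Tu d (T : measurableType d) (R : realType) (P : probability T R)
  (u : T -> R -> R) (f : T -> R) : \bar R :=
  (\int[P]_w (u w (f w))%:E)%E.

Definition Acont d (T : measurableType d) (R : realType) (u : T -> R -> R) : set T :=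
  [set w | continuous (u w)].

(* Main.v *)
Require Import Defs.
From HB Require Import structures.
From mathcomp Require Import all_boot all_order all_algebra.
From mathcomp Require Import all_classical all_reals all_analysis.
From mathcomp Require Import lra measurable_realfun.
Import Order.TTheory GRing.Theory Num.Theory.
Import numFieldNormedType.Exports.
Local Open Scope classical_set_scope.
Local Open Scope ring_scope.

Section F.
Context {R : realType} (v : R -> R).
Hypothesis vr : forall x : R, v y @[y --> x^'+] --> v x.
Hypothesis vl : forall x : R, cvg (v y @[y --> x^'-]).
Hypothesis vm : {homo v : x y / x <= y}.

Definition lft x := lim (v y @[y --> x^'-]).

Lemma lft_cvg x : v y @[y --> x^'-] --> lft x.
Proof. exact: vl x. Qed.

Lemma lft_le x : lft x <= v x.
Proof.
apply: limr_le; first exact: vl.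
near=> y; apply: vm; near: y; exact: nbhs_left_le.
Unshelve. all: by end_near. Qed.

Lemma le_lft z x : z < x -> v z <= lft x.
Proof.
move=> zx; apply: limr_ge; first exact: vl.
near=> y; apply: vm; near: y; exact: nbhs_left_ge.
Unshelve. all: by end_near. Qed.

Lemma lft_seq x : v (x - (n.+1%:R)^-1) @[n --> \oo] --> lft x.
Proof.
have H := (cvg_at_leftP v x (lft x)).1 (lft_cvg x) (fun n => x - (n.+1%:R)^-1).
apply: H; split.
  by move=> n; rewrite ltrBlDr ltrDl invr_gt0.
rewrite -[X in _ --> X]subr0; apply: cvgB; first exact: cvg_cst.
exact: cvg_harmonic.
Qed.

Lemma cont_lft : continuous v <-> forall x, lft x = v x.
Proof.
split.
  move=> c x; apply: cvg_lim => //; apply: cvg_within_filter; exact: c.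
move=> h x; apply/left_right_continuousP; split; last exact: vr.
by rewrite -h; exact: lft_cvg.
Qed.

End F.
Lemma right_lt (R : realType) (v : R -> R) (x a : R) :
  v y @[y --> x^'+] --> v x -> {homo v : x y / x <= y} -> v x < a ->
  exists q : rat, x < ratr q /\ v (ratr q) < a.
Proof.
move=> vr vm vxa.
move/cvgr_lt: vr => /(_ a vxa) H1.
have [z [vza xz]] : exists z, v z < a /\ x < z.
  near (x^'+) => z; exists z; split; near: z => //; exact: nbhs_right_gt.
have [q] := rat_in_itvoo xz; rewrite in_itv /= => /andP[xq qz].
by exists q; split => //; apply: le_lt_trans vza; apply: vm; exact: ltW.
Unshelve. all: by end_near. Qed.

Lemma comp_meas d (T : measurableType d) (R : realType) (u : T -> R -> R)
  (ur : forall w x, u w y @[y --> x^'+] --> u w x)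
  (um : forall w, {homo u w : x y / x <= y})
  (mx : forall x, measurable_fun setT (fun w => u w x)) (g : T -> R) :
  measurable_fun setT g -> measurable_fun setT (fun w => u w (g w)).
Proof.
move=> mg.
apply: (measurability _ (measurable_realfun.RGenInftyO.measurableE R)) => //.
move=> _ [_ [a ->] <-].
rewrite (_ : setT `&` (fun w => u w (g w)) @^-1` `]-oo, a[ = \bigcup_(q : rat) ((setT `&` g @^-1` `]-oo, ratr q[) `&`
   (setT `&` (fun w => u w (ratr q)) @^-1` `]-oo, a[))).
  apply: bigcupT_measurable_rat => q; apply: measurableI.
    by apply: mg => //; exact: measurable_itv.
  by apply: mx => //; exact: measurable_itv.
apply/seteqP; split => w /=.
  rewrite !in_itv /= => -[_ H].
  have [q [h1 h2]] := @right_lt _ _ _ _ (ur w (g w)) (um w) H.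
  by exists q => //=; rewrite !in_itv /=.
move=> [q _] /=; rewrite !in_itv /= => -[[_ h1] [_ h2]]; split => //.
by apply: le_lt_trans h2; apply: um; exact: ltW.
Qed.
Section H.
Context {R : realType} (v : R -> R).
Hypothesis vr : forall x : R, v y @[y --> x^'+] --> v x.
Hypothesis vm : {homo v : x y / x <= y}.

Definition hitS (c : R) (N : nat) : set R :=
  [set x | - N%:R <= x <= N%:R /\ c <= v x] `|` [set N%:R].
Definition hit c N := inf (hitS c N).

Lemma hitS_lb c N : lbound (hitS c N) (- N%:R).
Proof.
move=> x [[/andP[]]//|->]; by apply: (@le_trans _ _ 0); rewrite ?oppr_le0 ler0n.
Qed.

Lemma hitS_n0 c N : hitS c N !=set0.
Proof. by exists N%:R; right. Qed.

Lemma hit_le c N x : hitS c N x -> hit c N <= x.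
Proof. by move=> Sx; apply: ge_inf => //; exists (- N%:R); exact: hitS_lb. Qed.

Lemma hit_bounds c N : - N%:R <= hit c N <= N%:R.
Proof.
apply/andP; split; last by apply: hit_le; right.
by apply: lb_le_inf; [exact: hitS_n0|exact: hitS_lb].
Qed.

Lemma hit_lt c N t : t < N%:R -> - N%:R <= t -> (t < hit c N <-> v t < c).
Proof.
move=> tN Nt; split.
  move=> th; rewrite ltNge; apply/negP => ct.
  have : hit c N <= t by apply: hit_le; left; split => //; rewrite Nt (ltW tN).
  by rewrite leNgt th.
move=> vtc; rewrite ltNge; apply/negP => ht.
move/cvgr_lt: (vr t) => /(_ c vtc) H1.
have [z [vzc [tz zN]]] : exists z, v z < c /\ t < z /\ z < N%:R.
  near (t^'+) => z; exists z; split; last split; near: z => //.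
    exact: nbhs_right_gt.
  exact: nbhs_right_lt.
have : z <= hit c N.
  apply: lb_le_inf; first exact: hitS_n0.
  move=> x [[/andP[_ _] cx]|->]; last exact: ltW.
  rewrite leNgt; apply/negP => xz.
  have := vm _ _ (ltW xz); rewrite leNgt => /negP; apply.
  exact: lt_le_trans vzc cx.
by rewrite leNgt (le_lt_trans ht tz).
Unshelve. all: by end_near. Qed.

Lemma hit_eq c N x0 : - N%:R <= x0 <= N%:R -> (forall z, z < x0 -> v z < c) ->
  c <= v x0 -> hit c N = x0.
Proof.
move=> x0N zc cx0; apply/eqP; rewrite eq_le; apply/andP; split.
  by apply: hit_le; left.
apply: lb_le_inf; first exact: hitS_n0.
move=> x [[/andP[_ _] cx]|->]; last by case/andP: x0N.
rewrite leNgt; apply/negP => xx0.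
by have := zc _ xx0; rewrite ltNge cx.
Qed.

End H.

Lemma abs_between (R : realDomainType) (a y b : R) :
  a <= y -> y <= b -> `|y| <= `|a| + `|b|.
Proof.
move=> ay yb.
have h1 := ler_norm a; have h2 := ler_norm b.
have h3 : - a <= `|a| by rewrite -normrN ler_norm.
have h4 : - b <= `|b| by rewrite -normrN ler_norm.
have [y0|y0] := leP 0 y.
  rewrite ger0_norm //; lra.
rewrite ltr0_norm //; lra.
Qed.

Section G.
Context d (T : measurableType d) (R : realType) (P : probability T R) (u : T -> R -> R).
Hypothesis ur : forall w x, u w y @[y --> x^'+] --> u w x.
Hypothesis ulc : forall w x, cvg (u w y @[y --> x^'-]).
Hypothesis um : forall w, {homo u w : x y / x <= y}.
Hypothesis ui : forall x : R, P.-integrable setT (fun w => (u w x)%:E).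
Hypothesis H3 : forall (fn : nat -> T -> R) (f : T -> R),
      (forall n, Linfty (fn n)) -> Linfty f ->
      (forall w, {homo (fun n => fn n w) : n m / (n <= m)%N >-> n <= m}) ->
      (forall w, fn n w @[n --> \oo] --> f w) ->
      Tu P u (fn n) @[n --> \oo] --> Tu P u f.

Lemma mx x : measurable_fun setT (fun w => u w x).
Proof. by apply/measurable_EFinP; case/integrableP: (ui x). Qed.

Lemma mcomp g : measurable_fun setT g -> measurable_fun setT (fun w => u w (g w)).
Proof. by apply: comp_meas => //; exact: mx. Qed.

Lemma null_jump (g : T -> R) (K : R) : measurable_fun setT g -> (forall w, `|g w| <= K) ->
  measurable [set w | lft (u w) (g w) < u w (g w)] /\
  P [set w | lft (u w) (g w) < u w (g w)] = 0%E.
Proof.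
move=> mg gK.
pose fn n w := g w - (n.+1%:R)^-1.
have mfn n : measurable_fun setT (fn n).
  by apply: measurable_funB => //; exact: measurable_cst.
have fnK n w : `|fn n w| <= K + 1.
  rewrite /fn (le_trans (ler_normB _ _)) // lerD // ger0_norm ?invr_ge0 //.
  by rewrite invf_le1 // ler1n.
have mug := mcomp _ mg.
have mufn n := mcomp _ (mfn n).
have lseq w : u w (fn n w) @[n --> \oo] --> lft (u w) (g w).
  exact: lft_seq.
have mlg : measurable_fun setT (fun w => lft (u w) (g w)).
  by apply: (measurable_fun_cvg (h := fun n w => u w (fn n w))) => // w _; exact: lseq.
pose G w := (`|(u w (- (K + 1)))%:E| + `|(u w (K + 1))%:E|)%E.
have iG : P.-integrable setT G.
  by apply: integrableD => //; apply: integrable_abse; exact: ui.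
have bnd y w : `|y| <= K + 1 -> (`|(u w y)%:E| <= G w)%E.
  rewrite ler_norml => /andP[y1 y2].
  by rewrite /G !abse_EFin -EFinD lee_fin; apply: abs_between; apply: um.
have mEfn n : measurable_fun setT (fun w => (u w (fn n w))%:E).
  exact/measurable_EFinP.
have mElg : measurable_fun setT (fun w => (lft (u w) (g w))%:E).
  exact/measurable_EFinP.
have Elseq w : (u w (fn n w))%:E @[n --> \oo] --> (lft (u w) (g w))%:E.
  by apply: cvg_EFin; [exact: nearW|exact: lseq].
have [ilg _ dct] := @dominated_convergence _ T R P setT measurableT
  (fun n w => (u w (fn n w))%:E) (fun w => (lft (u w) (g w))%:E) G
  mEfn mElg
  (aeW _ (fun w _ => Elseq w))
  iG
  (aeW _ (fun w n _ => bnd _ _ (fnK n w))).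
have hT : Tu P u (fn n) @[n --> \oo] --> Tu P u g.
  apply: H3.
  - by move=> n; split => //; exists (K + 1) => w; exact: fnK.
  - by split => //; exists K; exact: gK.
  - move=> w n m nm; rewrite /fn lerD2l lerN2 lef_pV2 ?posrE // ler_nat.
    by rewrite ltnS.
  - move=> w; rewrite -[X in _ --> X]subr0; apply: cvgB; first exact: cvg_cst.
    exact: cvg_harmonic.
have eqI : (\int[P]_w (u w (g w))%:E = \int[P]_w (lft (u w) (g w))%:E)%E.
  exact: (cvg_unique _ hT dct).
have iug : P.-integrable setT (fun w => (u w (g w))%:E).
  apply: le_integrable iG => //; first exact/measurable_EFinP.
  move=> w _; rewrite [X in (_ <= X)%E]gee0_abs; last first.
    by rewrite /G; apply: adde_ge0; exact: abse_ge0.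
  by apply: bnd; rewrite (le_trans (gK w)) // lerDl.
pose h w := u w (g w) - lft (u w) (g w).
have h0 w : 0 <= h w by rewrite subr_ge0; apply: lft_le; [exact: ulc|exact: um].
have mh : measurable_fun setT h by exact: measurable_funB.
have int0 : (\int[P]_w `|(h w)%:E| = 0)%E.
  transitivity (\int[P]_w ((u w (g w))%:E - (lft (u w) (g w))%:E))%E.
    by apply: eq_integral => w _; rewrite abse_EFin ger0_norm.
  rewrite integralB_EFin // eqI subee //.
  exact: integrable_fin_num.
have mhE : measurable_fun setT (fun w => (h w)%:E) by exact/measurable_EFinP.
have [N [mN PN0 sub]] := (ae_eq_integral_abs P measurableT mhE).1 int0.
have mE : measurable [set w | lft (u w) (g w) < u w (g w)].
  rewrite (_ : [set w | _] = setT `&` h @^-1` `]0, +oo[).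
    by apply: mh => //; exact: measurable_itv.
  apply/seteqP; split => w /=; rewrite in_itv /= andbT subr_gt0 //.
  by case.
split => //.
apply: (@subset_measure0 _ _ _ P _ _ mE mN _ PN0).
move=> w /= lw; apply: sub => /= /(_ I) /eqP.
by rewrite eqe subr_eq0 gt_eqF.
Qed.

Lemma mhit c N : measurable_fun setT (fun w => hit (u w) c N).
Proof.
apply: (measurability _ (measurable_realfun.RGenOInfty.measurableE R)) => //.
move=> _ [_ [t ->] <-].
have hb w := hit_bounds (u w) c N.
have [tN|tN] := leP N%:R t.
  rewrite (_ : _ `&` _ = set0) //; apply/seteqP; split => // w /=.
  rewrite in_itv /= andbT => -[_ h]; have /andP[_ h2] := hb w.
  by move: (lt_le_trans h (le_trans h2 tN)); rewrite ltxx.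
have [Nt|Nt] := ltP t (- N%:R).
  rewrite (_ : _ `&` _ = setT) //; apply/seteqP; split => // w /= _.
  rewrite in_itv /= andbT; split => //; have /andP[h1 _] := hb w.
  exact: lt_le_trans Nt h1.
rewrite (_ : _ `&` _ = setT `&` (fun w => u w t) @^-1` `]-oo, c[).
  by apply: mx => //; exact: measurable_itv.
apply/seteqP; split => w /=; rewrite !in_itv /= andbT => -[_ h]; split => //.
  exact: (@hit_lt _ (u w) (ur w) (um w) c N t tN Nt).1 h.
exact: (@hit_lt _ (u w) (ur w) (um w) c N t tN Nt).2 h.
Qed.

Definition rr (n : nat) : rat := odflt 0%R (unpickle n).

Definition EE n N := [set w | lft (u w) (hit (u w) (ratr (rr n)) N) <
   u w (hit (u w) (ratr (rr n)) N)].

Lemma EE_null n N : measurable (EE n N) /\ P (EE n N) = 0%E.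
Proof.
apply: (null_jump _ N%:R); first exact: mhit.
move=> w; have /andP[h1 h2] := hit_bounds (u w) (ratr (rr n)) N.
by rewrite ler_norml h1 h2.
Qed.

Lemma Acont_eq : Acont u = ~` (\bigcup_n \bigcup_N EE n N).
Proof.
apply/seteqP; split => w /=.
  move=> /(cont_lft (u w) (ur w) (ulc w)) h [n _ [N _]]; rewrite /EE /= h.
  by rewrite ltxx.
move=> nE; apply/(cont_lft (u w) (ur w) (ulc w)) => x.
apply/eqP; rewrite eq_le lft_le ?andbT; [|exact: ulc|exact: um].
rewrite leNgt; apply/negP => lx.
have [q] := rat_in_itvoo lx; rewrite in_itv /= => /andP[q1 q2].
pose N := (Num.truncn `|x|).+1.
have xN : `|x| <= N%:R by apply: ltW; exact: truncnS_gt.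
apply: nE; exists (pickle q) => //; exists N => //.
rewrite /EE /rr pickleK /=.
rewrite (@hit_eq _ (u w) _ _ x); first by [].
- by rewrite -ler_norml.
- move=> z zx; apply: le_lt_trans q1; apply: le_lft => //.
- exact: ltW.
Qed.

End G.

Theorem mainTheorem14 (d : measure_display) (T : measurableType d) (R : realType)
  (P : probability T R) (u : T -> R -> R) :
  (forall w : T,
      (forall x : R, u w y @[y --> x^'+] --> u w x) /\
      (forall x : R, cvg (u w y @[y --> x^'-])) /\
      {homo u w : x y / x <= y} /\
      u w 0 = 0) ->
  (forall x : R, P.-integrable setT (fun w => (u w x)%:E)) ->
  (forall (fn : nat -> T -> R) (f : T -> R),
      (forall n, Linfty (fn n)) -> Linfty f ->
      (forall w, {homo (fun n => fn n w) : n m / (n <= m)%N >-> n <= m}) ->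
      (forall w, fn n w @[n --> \oo] --> f w) ->
      Tu P u (fn n) @[n --> \oo] --> Tu P u f) ->
  measurable (Acont u) /\ P (Acont u) = 1%E.
Proof.
move=> H1 H2 H3.
have ur w := (H1 w).1.
have ulc w := (H1 w).2.1.
have um w := (H1 w).2.2.1.
have EN := @EE_null d T R P u ur ulc um H2 H3.
rewrite (@Acont_eq d T R u ur ulc um).
have mU : measurable (\bigcup_n \bigcup_N EE d T R u n N).
  by apply: bigcupT_measurable => n; apply: bigcupT_measurable => N; exact: (EN n N).1.
split; first exact: measurableC.
rewrite probability_setC //.
have -> : P (\bigcup_n \bigcup_N EE d T R u n N) = 0%E.
  apply/(negligibleP _ mU); apply: negligible_bigcup => n.
  apply: negligible_bigcup => N.
  by apply/(negligibleP _ (EN n N).1); exact: (EN n N).2.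
by rewrite sube0.
Qed.
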